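(* Let $N$ be a binoid and let $$\infty\to S_1\xrightarrow{\phi_2}S_2\xrightarrow{\phi_3}\cdots\xrightarrow{\phi_n}S_n\to\infty$$ be a strongly exact sequence of finite $N$-sets. Then $\sum_{i=1}^n(-1)^i\,\#S_i=0$.
   Context: A binoid $(N,+,0,\infty)$ is a commutative monoid $(N,+,0)$ with an element $\infty$ satisfying $a+\infty=\infty$ for all $a\in N$. An $N$-set is a pointed set $(S,p)$ with a map $N\times S\to S$, $(n,s)\mapsto n+s$, such that $(n+m)+s=n+(m+s)$, $0+s=s$, $\infty+s=p$ and $n+p=p$; a homomorphism of $N$-sets is a map $\phi$ with $\phi(p)=p$ and $\phi(n+s)=n+\phi(s)$. Its image is $\operatorname{im}\phi=\phi(S)$ and its kernel is $\ker\phi=\phi^{-1}(p)$. The symbol $\infty$ at the ends denotes the one-point $N$-set. A sequence $S_0\xrightarrow{\phi_1}S_1\xrightarrow{\phi_2}\cdots\xrightarrow{\phi_n}S_n$ of $N$-sets is exact if $\operatorname{im}\phi_k=\ker\phi_{k+1}$ for all $k$, and strongly exact if moreover each $\phi_k$ is injective on $S_{k-1}\setminus\ker\phi_k$. For a finite pointed set $S$, $\#S=|S|-1$. *)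

(* Defs.v *)
From mathcomp Require Import all_boot all_order all_algebra.
Set Implicit Arguments. Unset Strict Implicit. Unset Printing Implicit Defensive.

Definition is_binoid (N : Type) (add : N -> N -> N) (zero inf : N) : Prop :=
  [/\ forall a b c, add (add a b) c = add a (add b c),
      forall a b, add a b = add b a,
      forall a, add zero a = a
    & forall a, add a inf = inf].

Definition is_Nset (N : Type) (add : N -> N -> N) (zero inf : N)
  (S : Type) (p : S) (act : N -> S -> S) : Prop :=
  [/\ forall n m s, act (add n m) s = act n (act m s),
      forall s, act zero s = s,
      forall s, act inf s = p
    & forall n, act n p = p].

Definition is_Nhom (N : Type) (S T : Type) (pS : S) (actS : N -> S -> S)
  (pT : T) (actT : N -> T -> T) (f : S -> T) : Prop :=
  f pS = pT /\ forall n s, f (actS n s) = actT n (f s).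

Definition im_set (A B : finType) (f : A -> B) : {set B} := [set f a | a : A].
Definition ker_set (A B : finType) (f : A -> B) (pB : B) : {set A} :=
  [set a | f a == pB].

Definition sharp (A : finType) : int := (#|A|%:Z - 1)%R.

(* Main.v *)
Require Import Defs.
From mathcomp Require Import all_boot all_order all_algebra.
From mathcomp Require Import ring.
Import GRing.Theory.
Local Open Scope ring_scope.

Lemma tele (a : nat -> int) (m : nat) :
  \sum_(1 <= i < m.+1) (-1) ^+ i * (a i.-1 + a i) = (-1) ^+ m * a m - a 0%N.
Proof.
elim: m => [|m IH]; first by rewrite big_geq // expr0 mul1r subrr.
rewrite big_nat_recr //= IH exprS /=.
rewrite !mulN1r; ring.
Qed.

Lemma card_im (A B : finType) (f : A -> B) (pA : A) (pB : B)
  (hf : f pA = pB) (inj : {in ~: ker_set f pB &, injective f}) :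
  #|im_set f| = (#|~: ker_set f pB|).+1.
Proof.
have -> : im_set f = pB |: (f @: (~: ker_set f pB)).
  apply/setP => y; rewrite /im_set !inE; apply/imsetP/idP.
    case=> x _ ->; case: (boolP (x \in ker_set f pB)).
      by rewrite inE => /eqP ->; rewrite eqxx.
    by move=> hx; apply/orP; right; apply/imsetP; exists x => //; rewrite inE.
  case/orP => [/eqP ->|/imsetP [x _ ->]]; last by exists x.
  by exists pA.
rewrite cardsU1 card_in_imset //.
have -> : (pB \in f @: ~: ker_set f pB) = false.
  apply/negbTE/negP => /imsetP [x]; rewrite !inE => hx e.
  by rewrite -e eqxx in hx.
by [].
Qed.

Theorem mainTheorem16
  (N : Type) (addN : N -> N -> N) (zeroN infN : N)
  (hN : is_binoid addN zeroN infN)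
  (n : nat) (S : nat -> finType) (p : forall k, S k) (act : forall k, N -> S k -> S k)
  (hS : forall k, is_Nset addN zeroN infN (p k) (act k))
  (h0 : forall s : S 0%N, s = p 0%N)
  (hlast : forall s : S n.+1, s = p n.+1)
  (phi : forall k, S k -> S k.+1)
  (hphi : forall k, (k <= n)%N -> is_Nhom (p k) (act k) (p k.+1) (act k.+1) (phi k))
  (hexact : forall k, (k < n)%N ->
       im_set (phi k) = ker_set (phi k.+1) (p k.+2))
  (hstrong : forall k, (k <= n)%N ->
       {in ~: ker_set (phi k) (p k.+1) &, injective (phi k)}) :
  \sum_(1 <= i < n.+1) (-1) ^+ i * sharp (S i) = 0.
Proof.
pose a (k : nat) : int := (#|~: ker_set (phi k) (p k.+1)|)%:Z.
have hS' : forall k, #|S k| = (#|ker_set (phi k) (p k.+1)| + #|~: ker_set (phi k) (p k.+1)|)%N.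
  by move=> k; rewrite cardsC.
have hK : forall k, (k < n)%N -> #|ker_set (phi k.+1) (p k.+2)| = (#|~: ker_set (phi k) (p k.+1)|).+1.
  move=> k hk; rewrite -hexact //; apply: (@card_im _ _ _ (p k)).
    by case: (hphi k (ltnW hk)).
  exact: hstrong (ltnW hk).
have hsh : forall i, (1 <= i < n.+1)%N -> sharp (S i) = a i.-1 + a i.
  move=> [|i] //= hi.
  rewrite /sharp /a hS' hK //= -addn1 !PoszD; ring.
rewrite (eq_big_nat _ _ (F2 := fun i => (-1) ^+ i * (a i.-1 + a i))); last first.
  by move=> i hi; rewrite hsh.
rewrite tele.
have a0 : a 0%N = 0.
  rewrite /a; apply/eqP; rewrite eqz_nat cards_eq0; apply/eqP/setP => x.
  rewrite !inE (h0 x); case: (hphi 0%N (leq0n _)) => -> _; by rewrite eqxx.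
have an : a n = 0.
  rewrite /a; apply/eqP; rewrite eqz_nat cards_eq0; apply/eqP/setP => x.
  by rewrite !inE (hlast (phi n x)) eqxx.
by rewrite a0 an mulr0 subr0.
Qed.
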